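(* Fix $d\ge1$ and a finite set $C$ of colours. There is a simple interpretation $J=(\nu(x),\eta(x,y))$ given by first-order formulas such that for every graph $G$ having a tree-model $T$ of depth $d$ with colours from $C$, $G\simeq T_1^J$, where $T_1$ is the labelled tree associated with $T$ as described below. That is, a shrub interpretation is FO definable for each fixed $d$.
   Context: A graph $G$ has a tree-model of $m$ colours and depth $d$ if there is a rooted tree $T$ such that: the set of leaves of $T$ is exactly $V(G)$; every root-to-leaf path has length exactly $d$; each leaf is assigned one of $m$ colours; and whether $uv\in E(G)$ depends solely on the colours of $u,v$ and the distance between $u,v$ in $T$. For such $T$, the labelled tree $T_1$ is $T$ with the leaf colours as labels, where additionally each leaf $v$ gets every label $(i,c)$ such that some vertex $u$ of colour $c$ adjacent to $v$ in $G$ has distance $2i$ from $v$ in $T$. A simple interpretation $(\nu,\eta)$ assigns to a labelled tree $T_1$ the graph $T_1^J$ with vertex set $\{a:T_1\models\nu(a)\}$ and edge set $\{ab: T_1\models\eta(a,b)\}$; a shrub interpretation is such an interpretation with $T_1^J\simeq G$, the vertices being the leaves. *)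

(* Defs.v *)
From mathcomp Require Import all_boot.
Set Implicit Arguments. Unset Strict Implicit. Unset Printing Implicit Defensive.

Definition rooted_tree (V : finType) (r : V) (p : V -> V) : Prop :=
  p r = r /\ forall v : V, exists k, iter k p v = r.

Definition parent_of (V : finType) (r : V) (p : V -> V) (x y : V) : Prop :=
  x <> r /\ p x = y.

Definition is_leaf (V : finType) (r : V) (p : V -> V) (v : V) : Prop :=
  forall u : V, ~ parent_of r p u v.

Definition has_depth (V : finType) (r : V) (p : V -> V) (v : V) (n : nat) : Prop :=
  iter n p v = r /\ forall k, k < n -> iter k p v <> r.

Definition tree_dist (V : finType) (p : V -> V) (u v : V) (n : nat) : Prop :=
  (exists k l, k + l = n /\ iter k p u = iter l p v) /\
  (forall k l, iter k p u = iter l p v -> n <= k + l).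

Definition tree_model (d : nat) (C W : finType) (e : rel W)
    (V : finType) (r : V) (p : V -> V) (f : W -> V) (col : W -> C) : Prop :=
  [/\ rooted_tree r p,
      injective f,
      (forall v : V, is_leaf r p v <-> exists x, f x = v),
      (forall v : V, is_leaf r p v -> has_depth r p v d) &
      exists M : C -> C -> nat -> bool,
        forall x y : W, x != y -> forall n, tree_dist p (f x) (f y) n ->
          e x y = M (col x) (col y) n].

Definition label (d : nat) (C : finType) : Type := (C + ('I_d.+1 * C))%type.

Definition T1_label (d : nat) (C W : finType) (e : rel W)
    (V : finType) (p : V -> V) (f : W -> V) (col : W -> C)
    (v : V) (l : label d C) : Prop :=
  match l with
  | inl c => exists x, f x = v /\ col x = c
  | inr (i, c) => exists x, f x = v /\
        exists u, col u = c /\ e x u /\ tree_dist p (f x) (f u) (2 * i)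
  end.

Inductive formula (L : Type) : Type :=
  | FPar of nat & nat            (* FPar x y : y is the parent of x *)
  | FEq of nat & nat
  | FLab of L & nat
  | FFalse
  | FNot of formula L
  | FAnd of formula L & formula L
  | FOr of formula L & formula L
  | FEx of nat & formula L.

Fixpoint sat (L : Type) (V : finType) (r : V) (p : V -> V) (lab : V -> L -> Prop)
    (env : nat -> V) (phi : formula L) : Prop :=
  match phi with
  | FPar x y => parent_of r p (env x) (env y)
  | FEq x y => env x = env y
  | FLab l x => lab (env x) l
  | FFalse => False
  | FNot psi => ~ sat r p lab env psi
  | FAnd a b => sat r p lab env a /\ sat r p lab env b
  | FOr a b => sat r p lab env a \/ sat r p lab env b
  | FEx x psi => exists v : V, sat r p lab (fun n => if n == x then v else env n) psi
  end.

(* environment assigning a to variable 0 and b to all other variables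
   (formulas nu(x), eta(x,y) use variables 0 = x and 1 = y). *)
Definition env2 (V : Type) (a b : V) : nat -> V :=
  fun n => if n is 0 then a else b.

(* Main.v *)
Require Import Defs.
From mathcomp Require Import all_boot.
From mathcomp Require Import zify.
Set Implicit Arguments. Unset Strict Implicit.

Fixpoint anc (L : Type) (b i s t : nat) : formula L :=
  match i with
  | 0 => FEq L s t
  | i'.+1 => FEx (b + i) (FAnd (FPar L s (b + i)) (anc L b i' (b + i) t))
  end.

Lemma sat_anc (L : Type) (V : finType) (r : V) (p : V -> V) (lab : V -> L -> Prop) b :
  forall i env s t, t <= b -> (s <= b \/ b + i < s) ->
  (sat r p lab env (anc L b i s t) <->
   (forall j, j < i -> iter j p (env s) <> r) /\ iter i p (env s) = env t).
Proof.
elim=> [|i IH] env s t Ht Hs /=.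
  split; [by move=> ->; split|by case].
have Hs' : (s == b + i.+1) = false by apply/eqP; lia.
have Ht' : (t == b + i.+1) = false by apply/eqP; lia.
split.
- move=> [v [[Hr Hp] H]].
  move: Hp; rewrite Hs' eqxx => Hp.
  have := (proj1 (IH _ _ _ Ht (or_intror (ltac:(lia) : b + i < b + i.+1))) H).
  rewrite eqxx Ht' => -[H1 H2]; split.
    case=> [|j] Hj; first by rewrite Hs' in Hr.
    rewrite iterSr Hp; apply: H1; lia.
  by rewrite -iterS iterSr Hp.
- move=> [H1 H2]; exists (p (env s)); split.
    rewrite Hs' eqxx; split => //; exact: (H1 0).
  apply/(IH _ _ _ Ht (or_intror (ltac:(lia) : b + i < b + i.+1))).
  rewrite eqxx Ht'; split.
    move=> j Hj; rewrite -iterSr; apply: H1; lia.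
  by rewrite -iterSr.
Qed.

Definition same (L : Type) (i : nat) : formula L :=
  FEx 2 (FAnd (anc L 2 i 0 2) (anc L 2 i 1 2)).

Section Tree.
Variables (V : finType) (r : V) (p : V -> V) (d : nat).
Hypothesis pr : p r = r.

Lemma iter_r n : iter n p r = r.
Proof. by elim: n => //= n ->. Qed.

Lemma iter_after a k : iter d p a = r -> d <= k -> iter k p a = r.
Proof. by move=> H Hk; rewrite -(subnK Hk) iterD H iter_r. Qed.

Lemma common_mono a b k m : iter k p a = iter k p b -> k <= m ->
  iter m p a = iter m p b.
Proof. by move=> H Hk; rewrite -(subnK Hk) !iterD H. Qed.

Lemma sat_same (L : Type) (lab : V -> L -> Prop) a b i :
  has_depth r p a d -> has_depth r p b d -> i <= d ->
  (sat r p lab (env2 a b) (same L i) <-> iter i p a = iter i p b).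
Proof.
move=> [_ Ha] [_ Hb] Hi /=; split.
- move=> [z [H1 H2]].
  have [_ E1] := proj1 (@sat_anc L V r p lab 2 i _ 0 2 (leqnn 2) (or_introl isT)) H1.
  have [_ E2] := proj1 (@sat_anc L V r p lab 2 i _ 1 2 (leqnn 2) (or_introl isT)) H2.
  by move: E1 E2 => /= -> ->.
- move=> E; exists (iter i p a); split.
  + apply/(@sat_anc L V r p lab 2 i _ 0 2 (leqnn 2) (or_introl isT)) => /=; split => //.
    move=> j Hj; apply: Ha; lia.
  + apply/(@sat_anc L V r p lab 2 i _ 1 2 (leqnn 2) (or_introl isT)) => /=; split => //.
    move=> j Hj; apply: Hb; lia.
Qed.

Lemma dist_min a b j :
  has_depth r p a d -> has_depth r p b d ->
  iter j p a = iter j p b -> (forall k, iter k p a = iter k p b -> j <= k) ->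
  tree_dist p a b (2 * j).
Proof.
move=> [Ad Ha] [Bd Hb] Hj Hmin; split.
  by exists j, j; split => //; lia.
have jd : j <= d by apply: Hmin; rewrite Ad Bd.
move=> k l E.
case: (leqP k d) => Hk; case: (leqP l d) => Hl.
- case: (ltngtP k l) => Hkl.
  + exfalso; apply: (Ha (d - l + k)); first lia.
    by rewrite iterD E -iterD subnK.
  + exfalso; apply: (Hb (d - k + l)); first lia.
    by rewrite iterD -E -iterD subnK.
  + subst l; have := Hmin _ E; lia.
- have Er : iter k p a = r by rewrite E; apply: iter_after => //; lia.
  case: (ltnP k d) => Hk'; first by case: (Ha _ Hk' Er).
  lia.
- have Er : iter l p b = r by rewrite -E; apply: iter_after => //; lia.
  case: (ltnP l d) => Hl'; first by case: (Hb _ Hl' Er).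
  lia.
- lia.
Qed.
End Tree.

Definition bigor (L : Type) (T : Type) (g : T -> formula L) (s : seq T) : formula L :=
  foldr (fun x acc => FOr (g x) acc) (FFalse L) s.

Lemma sat_bigor (L : Type) (T : eqType) (V : finType) (r : V) (p : V -> V)
   (lab : V -> L -> Prop) env (g : T -> formula L) (s : seq T) :
  sat r p lab env (bigor g s) <-> exists2 x, x \in s & sat r p lab env (g x).
Proof.
elim: s => [|x s IH] /=; first by split => // -[].
split.
- case=> [H|/IH [y Hy H]]; first by exists x; rewrite ?mem_head.
  by exists y; rewrite // in_cons Hy orbT.
- move=> [y]; rewrite in_cons => /orP [/eqP ->|Hy] H; first by left.
  by right; apply/IH; exists y.
Qed.

Definition nuF (d : nat) (C : finType) : formula (label d C) :=
  bigor (fun c : C => FLab (inl c : label d C) 0) (enum C).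

Definition etaF (d : nat) (C : finType) : formula (label d C) :=
  bigor (fun ic : 'I_d.+1 * C =>
    FAnd (FLab (inr ic : label d C) 0)
      (FAnd (FLab (inl ic.2 : label d C) 1)
        (FAnd (same (label d C) ic.1) (FNot (same (label d C) (ic.1).-1)))))
    (enum (@predT ('I_d.+1 * C)%type)).


Theorem lemma4 (d : nat) (C : finType) :
  1 <= d ->
  exists nu eta : formula (label d C),
    forall (W : finType) (e : rel W),
      irreflexive e -> symmetric e ->
      forall (V : finType) (r : V) (p : V -> V) (f : W -> V) (col : W -> C),
        @tree_model d C W e V r p f col ->
        let lab := @T1_label d C W e V p f col in
        (forall a : V, sat r p lab (env2 a a) nu <-> exists x : W, f x = a) /\
        (forall x y : W, x != y ->
           (e x y <-> sat r p lab (env2 (f x) (f y)) eta)).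
Proof.
move=> Hd; exists (nuF d C), (etaF d C).
move=> W e irr sym V r p f col [[pr Hroot] Hinj Hleaf Hdep [M HM]] lab; split.
  move=> a; rewrite /nuF sat_bigor; split.
    by move=> [c _ [x [fx _]]]; exists x.
  by move=> [x fx]; exists (col x); rewrite ?mem_enum //; exists x.
move=> x y xy.
have Ha := Hdep _ (proj2 (Hleaf (f x)) (ex_intro _ x erefl)).
have Hb := Hdep _ (proj2 (Hleaf (f y)) (ex_intro _ y erefl)).
have exP : exists k, iter k p (f x) == iter k p (f y).
  by exists d; rewrite (proj1 Ha) (proj1 Hb).
case: (ex_minnP exP) => j /eqP Hj Hmin.
have Hmin' : forall k, iter k p (f x) = iter k p (f y) -> j <= k.
  by move=> k /eqP; apply: Hmin.
have dist := dist_min pr Ha Hb Hj Hmin'.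
have jd : j <= d by apply: Hmin'; rewrite (proj1 Ha) (proj1 Hb).
have j1 : 0 < j.
  case: j Hj {Hmin Hmin' dist jd} => //= E.
  by move/eqP: xy; case; apply: Hinj.
split.
- move=> exy; rewrite /etaF sat_bigor.
  have jd' : j < d.+1 by lia.
  exists (Ordinal jd', col y); first by rewrite mem_enum.
  rewrite /=; split.
    exists x; split => //; exists y; split => //; split => //.
  split; first by exists y.
  split; first by apply/(sat_same lab Ha Hb) => //.
  move/(sat_same lab Ha Hb) => H.
  have : j <= j.-1 by apply: Hmin'; apply: H; lia.
  lia.
- rewrite /etaF sat_bigor => -[[i c] _] /=.
  move=> [[x' [fx' [u [cu [exu du]]]]] [[y' [fy' cy']] [Hs Hns]]].
  move: (Hinj _ _ fx') (Hinj _ _ fy') => ??; subst x' y'.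
  have id : i <= d by have := ltn_ord i; lia.
  move: Hs => /(sat_same lab Ha Hb id) Hs.
  have Hns' : iter i.-1 p (f x) <> iter i.-1 p (f y).
    by move=> E; apply: Hns; apply/(sat_same lab Ha Hb) => //; lia.
  have ij : (i : nat) = j.
    have := Hmin' _ Hs => ji.
    case: (ltnP j i) => jl; last lia.
    exfalso; apply: Hns'; apply: (common_mono Hj); lia.
  have xu : x != u by apply/eqP => E; subst u; rewrite irr in exu.
  rewrite (HM x y xy _ dist) cy' -cu -ij.
  by rewrite -(HM x u xu _ du).
Qed.
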